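(* Consider MDVI$(\alpha,K,M)$ with any $\alpha\in[0,1)$ and positive integers $K,M$ on an MDP as in the context, and set $v_K := w_K - \alpha w_{K-1}$. Then, for every realization of the samples and every $k\in\{1,\dots,K\}$, $$v^{\pi'_{k-1}} + \sum_{j=0}^{k-1}\gamma^j\pi_{k-1}P_{k-1-j}^{k-2}\varepsilon_{k-j} - \gamma^kH\mathbf{1} \;\le\; v_k \;\le\; v^{\pi'_k} + \sum_{j=0}^{k-1}\gamma^j\pi_kP_{k-j}^{k-1}\varepsilon_{k-j} + \gamma^kH\mathbf{1}.$$
   Context: MDP: finite state set $\mathcal{X}$, finite action set $\mathcal{A}$, discount $\gamma\in[0,1)$, reward $r\in[-1,1]^{\mathcal{X}\times\mathcal{A}}$, transition kernel $P(y|x,a)$, $H=1/(1-\gamma)$. $P$ is the matrix with $(Pv)(x,a)=\sum_yP(y|x,a)v(y)$; a policy $\pi$ is the matrix with $(\pi q)(x)=\sum_a\pi(a|x)q(x,a)$; $P^\pi := P\pi$; $T^\pi q=r+\gamma P^\pi q$; $q^\pi$ its fixed point, $v^\pi=\pi q^\pi$. $\mathbf 1$ all-ones vector; inequalities componentwise. MDVI$(\alpha,K,M)$: $s_0 = 0$, $w_0=w_{-1}=0$; for $k=0,\dots,K-1$: $v_k = w_k-\alpha w_{k-1}$; for each $(x,a)$, independent samples $y_{k,m,x,a}\sim P(\cdot|x,a)$, $m\in[M]$; $q_{k+1}(x,a) = r(x,a)+\frac{\gamma}{M}\sum_m v_k(y_{k,m,x,a})$; $s_{k+1}=q_{k+1}+\alpha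 s_k$; $w_{k+1}(x)=\max_a s_{k+1}(x,a)$. $\pi_k$ ($k=0,\dots,K$) is a deterministic greedy policy w.r.t. $s_k$. Notation: $\widehat P_k v(x,a)=\frac1M\sum_mv(y_{k,m,x,a})$; $\varepsilon_k=\gamma\widehat P_{k-1}v_{k-1}-\gamma Pv_{k-1}$ for $k\in[K]$. For $i\ge j$, $P_j^i := P^{\pi_i}\cdots P^{\pi_j}$, and $P_j^i:=I$ if $i<j$. $\pi'_k$ is the non-stationary policy following $\pi_{k-t}$ at time step $t\le k$ and $\pi_0$ afterwards; its value is $v^{\pi'_k}=\pi_kT^{\pi_{k-1}}\cdots T^{\pi_1}q^{\pi_0}$ (so $v^{\pi'_0}=v^{\pi_0}$). *)

(* Defs.v *)
From HB Require Import structures.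
From mathcomp Require Import all_boot all_order all_algebra.
Set Implicit Arguments. Unset Strict Implicit. Unset Printing Implicit Defensive.
Import Order.TTheory GRing.Theory Num.Theory.
Local Open Scope ring_scope.

Section MDP.
Variables (R : realFieldType) (X A : finType) (gamma : R)
  (r : X -> A -> R) (P : X -> A -> X -> R).

(* (P v)(x,a) = sum_y P(y|x,a) v(y);  P x a y stands for P(y|x,a). *)
Definition Pv (v : X -> R) : X -> A -> R := fun x a => \sum_(z : X) P x a z * v z.

Definition piapp (pi : X -> A) (q : X -> A -> R) : X -> R := fun x => q x (pi x).

Definition Ppi (pi : X -> A) (q : X -> A -> R) : X -> A -> R := Pv (piapp pi q).

Definition Tpi (pi : X -> A) (q : X -> A -> R) : X -> A -> R :=
  fun x a => r x a + gamma * Ppi pi q x a.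

Fixpoint Pseg_aux (pis : nat -> X -> A) (j n : nat) (q : X -> A -> R) : X -> A -> R :=
  match n with
  | 0 => q
  | n'.+1 => Ppi (pis (j + n')%N) (Pseg_aux pis j n' q)
  end.

(* Pseg pis j i1 = P_j^{i1 - 1} = P^{pi_{i1-1}} ... P^{pi_j}  (identity if i1 - 1 < j) *)
Definition Pseg (pis : nat -> X -> A) (j i1 : nat) (q : X -> A -> R) : X -> A -> R :=
  Pseg_aux pis j (i1 - j) q.

Fixpoint Tchain (pis : nat -> X -> A) (n : nat) (q : X -> A -> R) : X -> A -> R :=
  match n with
  | 0 => q
  | n'.+1 => Tpi (pis n'.+1) (Tchain pis n' q)
  end.

(* value of the non-stationary policy pi'_k : pi_k T^{pi_{k-1}} ... T^{pi_1} q^{pi_0},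
   where qpi0 is (the) fixed point of T^{pi_0}. *)
Definition v_nonstat (pis : nat -> X -> A) (k : nat) (qpi0 : X -> A -> R) : X -> R :=
  piapp (pis k) (Tchain pis k.-1 qpi0).

Variables (alpha : R) (M : nat) (a0 : A) (y : nat -> 'I_M -> X -> A -> X).

(* max_a s(x,a)  (a0 is only used as a seed; the value does not depend on it) *)
Definition qmax (s : X -> A -> R) : X -> R :=
  fun x => \big[Num.max/s x a0]_(a : A) s x a.

Definition Phat (k : nat) (v : X -> R) : X -> A -> R :=
  fun x a => (M%:R)^-1 * \sum_(m < M) v (y k m x a).

(* mdvi k = (s_k, w_k, w_{k-1}) *)
Fixpoint mdvi (k : nat) : (X -> A -> R) * (X -> R) * (X -> R) :=
  match k with
  | 0 => (fun _ _ => 0, fun _ => 0, fun _ => 0)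
  | k'.+1 =>
      let: (s, w, wp) := mdvi k' in
      let v := fun x => w x - alpha * wp x in
      let q := fun x a => r x a + gamma * Phat k' v x a in
      let s' := fun x a => q x a + alpha * s x a in
      (s', qmax s', w)
  end.

Definition s_ (k : nat) : X -> A -> R := (mdvi k).1.1.
Definition w_ (k : nat) : X -> R := (mdvi k).1.2.
(* v_k = w_k - alpha w_{k-1}  (with w_{-1} = 0) *)
Definition v_ (k : nat) : X -> R := fun x => w_ k x - alpha * (mdvi k).2 x.
Definition eps (k : nat) : X -> A -> R :=
  fun x a => gamma * Phat k.-1 (v_ k.-1) x a - gamma * Pv (v_ k.-1) x a.

End MDP.

(* Main.v *)
Require Import Defs.
From HB Require Import structures.
From mathcomp Require Import all_boot all_order all_algebra.
From mathcomp Require Import ring lra.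
Import Order.TTheory GRing.Theory Num.Theory.
Local Open Scope ring_scope.
Set Implicit Arguments. Unset Strict Implicit.

Lemma Pv_mono (R : realFieldType) (X A : finType) (P : X -> A -> X -> R)
  (f g : X -> R) x a :
  (forall x a z, 0 <= P x a z) -> (forall z, f z <= g z) -> Pv P f x a <= Pv P g x a.
Proof.
move=> HP H; rewrite /Pv; apply: ler_sum => z _; exact: ler_wpM2l.
Qed.

Lemma Pv_const (R : realFieldType) (X A : finType) (P : X -> A -> X -> R) c x a :
  (forall x a, \sum_(z : X) P x a z = 1) -> Pv P (fun _ => c) x a = c.
Proof. by move=> H; rewrite /Pv -big_distrl /= H mul1r. Qed.

Lemma Pv_lin (R : realFieldType) (X A : finType) (P : X -> A -> X -> R)
  (f g : X -> R) c x a :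
  Pv P (fun z => f z + c * g z) x a = Pv P f x a + c * Pv P g x a.
Proof.
rewrite /Pv mulr_sumr -big_split /=; apply: eq_bigr => z _; ring.
Qed.

Lemma Pv_sum (R : realFieldType) (X A : finType) (P : X -> A -> X -> R) n
  (F : 'I_n -> X -> R) x a :
  Pv P (fun z => \sum_(j < n) F j z) x a = \sum_(j < n) Pv P (F j) x a.
Proof.
rewrite /Pv; under eq_bigr => z _ do rewrite mulr_sumr.
by rewrite exchange_big.
Qed.

Lemma qmax_greedy (R : realFieldType) (X A : finType) (a0 : A) (s : X -> A -> R)
  (pi : X -> A) x :
  (forall a, s x a <= s x (pi x)) -> qmax a0 s x = s x (pi x).
Proof.
move=> H; rewrite /qmax; apply/eqP; rewrite eq_le; apply/andP; split.
  by elim/big_ind: _ => // u v Hu Hv; rewrite ge_max Hu Hv.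
rewrite (bigD1 (pi x)) //= le_max lexx //.
Qed.

Lemma Pv_add3 (R : realFieldType) (X A : finType) (P : X -> A -> X -> R)
  (f g : X -> R) c x a :
  (forall x a, \sum_(z : X) P x a z = 1) ->
  Pv P (fun z => f z + g z + c) x a = Pv P f x a + Pv P g x a + c.
Proof.
move=> H; rewrite /Pv.
under eq_bigr do rewrite !mulrDr.
by rewrite !big_split /= -big_distrl /= H mul1r.
Qed.

Lemma Pv_scale (R : realFieldType) (X A : finType) (P : X -> A -> X -> R)
  (f : X -> R) c x a :
  Pv P (fun z => c * f z) x a = c * Pv P f x a.
Proof. rewrite /Pv mulr_sumr; apply: eq_bigr => z _; ring. Qed.

Lemma Pv_bound (R : realFieldType) (X A : finType) (P : X -> A -> X -> R)
  (f : X -> R) c x a :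
  (forall x a z, 0 <= P x a z) -> (forall x a, \sum_(z : X) P x a z = 1) ->
  (forall z, `|f z| <= c) -> `|Pv P f x a| <= c.
Proof.
move=> HP H1 Hf.
have L : Pv P (fun _ => - c) x a <= Pv P f x a.
  apply: Pv_mono => // z.
  by have := Hf z; rewrite ler_norml => /andP[].
have U : Pv P f x a <= Pv P (fun _ => c) x a.
  apply: Pv_mono => // z.
  by have := Hf z; rewrite ler_norml => /andP[].
rewrite !Pv_const // in L U.
by rewrite ler_norml L U.
Qed.

Lemma mdviS (R : realFieldType) (X A : finType) (gamma : R) (r : X -> A -> R)
  (alpha : R) (M : nat) (a0 : A) (y : nat -> 'I_M -> X -> A -> X) k :
  mdvi gamma r alpha a0 y k.+1 =
  (fun x a => r x a + gamma * Phat y k (v_ gamma r alpha a0 y k) x a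
              + alpha * s_ gamma r alpha a0 y k x a,
   qmax a0 (fun x a => r x a + gamma * Phat y k (v_ gamma r alpha a0 y k) x a
              + alpha * s_ gamma r alpha a0 y k x a),
   w_ gamma r alpha a0 y k).
Proof.
rewrite /v_ /s_ /w_ /=. by case: (mdvi _ _ _ _ _ k) => [[s w] wp].
Qed.

Theorem lemma25 (R : realFieldType) (X A : finType) (a0 : A) (gamma : R)
  (r : X -> A -> R) (P : X -> A -> X -> R) (alpha : R) (K M : nat)
  (y : nat -> 'I_M -> X -> A -> X) (pis : nat -> X -> A) (qpi0 : X -> A -> R) :
  0 <= gamma < 1 ->
  (forall x a, -1 <= r x a <= 1) ->
  (forall x a z, 0 <= P x a z) ->
  (forall x a, \sum_(z : X) P x a z = 1) ->
  0 <= alpha < 1 ->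
  (0 < K)%N -> (0 < M)%N ->
  (* pi_k (k = 0..K) is a deterministic greedy policy w.r.t. s_k *)
  (forall k, (k <= K)%N -> forall x a,
     s_ gamma r alpha a0 y k x a <= s_ gamma r alpha a0 y k x (pis k x)) ->
  (* qpi0 = q^{pi_0}, the fixed point of T^{pi_0} *)
  (forall x a, qpi0 x a = Tpi gamma r P (pis 0%N) qpi0 x a) ->
  forall k, (1 <= k <= K)%N -> forall x,
    v_nonstat gamma r P pis k.-1 qpi0 x
      + \sum_(j < k) gamma ^+ j *
          piapp (pis k.-1) (Pseg P pis (k.-1 - j) k.-1 (eps gamma r P alpha a0 y (k - j))) x
      - gamma ^+ k * (1 - gamma)^-1
    <= v_ gamma r alpha a0 y k x
  /\
    v_ gamma r alpha a0 y k x
    <= v_nonstat gamma r P pis k qpi0 x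
      + \sum_(j < k) gamma ^+ j *
          piapp (pis k) (Pseg P pis (k - j) k (eps gamma r P alpha a0 y (k - j))) x
      + gamma ^+ k * (1 - gamma)^-1.
Proof.
move=> /andP[g0 g1] Hr HP HP1 /andP[al0 al1] K0 M0 Hgr Hfix.
set H := (1 - gamma)^-1.
have H0 : 0 < 1 - gamma by rewrite subr_gt0.
pose m := \big[Num.max/0]_(p : X * A) `|qpi0 p.1 p.2|.
have hm : forall x a, `|qpi0 x a| <= m.
  by move=> x a; rewrite /m (bigD1 (x, a)) //= le_max lexx.
have m0 : 0 <= m by rewrite /m; elim/big_ind: _ => // u1 u2 Hu Hv; rewrite le_max Hu.
have hq : forall x a, `|qpi0 x a| <= 1 + gamma * m.
  move=> x a; rewrite Hfix /Tpi.
  apply: (le_trans (ler_normD _ _)); apply: lerD.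
    by have := Hr x a; rewrite ler_norml.
  rewrite normrM ger0_norm //; apply: ler_wpM2l => //.
  by apply: Pv_bound => // z; apply: hm.
have mH : m <= H.
  have : m <= 1 + gamma * m.
    have c0 : 0 <= 1 + gamma * m by rewrite addr_ge0 // mulr_ge0.
    move: (1 + gamma * m) c0 hq => c c0 hc.
    rewrite /m; elim/big_ind: _ => //.
      by move=> u1 u2 Hu Hv; rewrite ge_max Hu Hv.
  move=> Hm; rewrite /H -[(1 - gamma)^-1]mul1r ler_pdivlMr //; nra.
have qb : forall x a, `|Ppi P (pis 0%N) qpi0 x a| <= H.
  move=> x a; apply: Pv_bound => // z; exact: le_trans (hm _ _) mH.
have qlo : forall x a, r x a - gamma * H <= qpi0 x a.
  move=> x a; rewrite Hfix /Tpi; have := qb x a; rewrite ler_norml => /andP[u v].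
  have : gamma * (- H) <= gamma * Ppi P (pis 0%N) qpi0 x a by apply: ler_wpM2l.
  lra.
have qhi : forall x a, qpi0 x a <= r x a + gamma * H.
  move=> x a; rewrite Hfix /Tpi; have := qb x a; rewrite ler_norml => /andP[u v].
  have : gamma * Ppi P (pis 0%N) qpi0 x a <= gamma * H by apply: ler_wpM2l.
  lra.
set E := eps gamma r P alpha a0 y.
set v := v_ gamma r alpha a0 y.
set s := s_ gamma r alpha a0 y.
set w := w_ gamma r alpha a0 y.
pose Q k x a := r x a + gamma * Phat y k (v k) x a.
have hQ : forall k x a, Q k x a = r x a + gamma * Pv P (v k) x a + E k.+1 x a.
  by move=> k x a; rewrite /Q /E /eps /=; ring.
have hs : forall k x a, s k.+1 x a = Q k x a + alpha * s k x a.
  by move=> k x a; rewrite /s /s_ mdviS.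
have hv0 : forall x, v 0%N x = 0.
  by move=> x; rewrite /v /v_ /w_ /=; ring.
have hvS : forall k x, v k.+1 x = w k.+1 x - alpha * w k x.
  by move=> k x; rewrite /v /v_ mdviS.
have hw : forall k, (k <= K)%N -> forall x, w k x = s k x (pis k x).
  case=> [|k] Hk x; first by rewrite /w /s /w_ /s_.
  by rewrite /w /w_ mdviS /= (@qmax_greedy _ _ _ _ _ (pis k.+1)) // => a; move: (Hgr _ Hk x a); by rewrite /s /s_ mdviS.
have hvU : forall k, (k < K)%N -> forall x, v k.+1 x <= Q k x (pis k.+1 x).
  move=> k Hk x; rewrite hvS !hw // ?(ltnW Hk) // hs.
  have : alpha * s k x (pis k.+1 x) <= alpha * s k x (pis k x).
    by apply: ler_wpM2l => //; apply: (Hgr k (ltnW Hk)).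
  lra.
have hvL : forall k, (k < K)%N -> forall x, Q k x (pis k x) <= v k.+1 x.
  move=> k Hk x; rewrite hvS !hw // ?(ltnW Hk) //.
  have := Hgr k.+1 Hk x (pis k x); rewrite -/s !hs; lra.
have hT : forall k x a, Tchain gamma r P pis k qpi0 x a
    = r x a + gamma * Ppi P (pis k) (Tchain gamma r P pis k.-1 qpi0) x a.
  by case=> [|k] x a //=; rewrite Hfix.
pose BU k x a := Tchain gamma r P pis k qpi0 x a
  + \sum_(j < k.+1) gamma ^+ j * Pseg_aux P pis (k.+1 - j) j (E (k.+1 - j)%N) x a
  + gamma ^+ k.+1 * H.
have Pv0 : forall x a, Pv P (v 0%N) x a = 0.
  by move=> x a; rewrite /Pv big1 // => z _; rewrite hv0 mulr0.
have UB : forall k, (k < K)%N -> forall x a, Q k x a <= BU k x a.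
  elim=> [|k IH] Hk x a.
    rewrite hQ /BU big_ord1 /= subn0 expr0 mul1r expr1 Pv0.
    have := qlo x a; lra.
  have IH' := IH (ltnW Hk).
  have Hpv : Pv P (v k.+1) x a <= Pv P (fun z => BU k z (pis k.+1 z)) x a.
    apply: Pv_mono => // z; exact: le_trans (hvU _ (ltnW Hk) z) (IH' _ _).
  rewrite /BU Pv_add3 // Pv_sum in Hpv.
  rewrite hQ /BU big_ord_recl /= subn0 expr0 mul1r.
  rewrite (eq_bigr (fun j : 'I_k.+1 => gamma * Pv P (fun z => gamma ^+ j *
     Pseg_aux P pis (k.+1 - j) j (E (k.+1 - j)%N) z (pis k.+1 z)) x a)); last first.
    move=> i _; rewrite /bump leq0n add0n add1n subSS subnK ?(ltnW (ltn_ord i)) //.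
    by rewrite Pv_scale exprS mulrA.
  rewrite -mulr_sumr /Tpi /Ppi /piapp exprS.
  have := ler_wpM2l g0 Hpv.

  lra.
pose BL k x a := Tchain gamma r P pis k.-1 qpi0 x a
  + \sum_(j < k.+1) gamma ^+ j * Pseg_aux P pis (k - j) j (E (k.+1 - j)%N) x a
  - gamma ^+ k.+1 * H.
have LB : forall k, (k < K)%N -> forall x a, BL k x a <= Q k x a.
  elim=> [|k IH] Hk x a.
    rewrite hQ /BL big_ord1 /= subn0 expr0 mul1r expr1 Pv0.
    have := qhi x a; lra.
  have IH' := IH (ltnW Hk).
  have Hpv : Pv P (fun z => BL k z (pis k z)) x a <= Pv P (v k.+1) x a.
    apply: Pv_mono => // z; exact: le_trans (IH' _ _) (hvL _ (ltnW Hk) z).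
  rewrite /BL Pv_add3 // Pv_sum in Hpv.
  rewrite hQ /BL big_ord_recl /= subn0 expr0 mul1r (hT k x a).
  rewrite (eq_bigr (fun j : 'I_k.+1 => gamma * Pv P (fun z => gamma ^+ j *
     Pseg_aux P pis (k - j) j (E (k.+1 - j)%N) z (pis k z)) x a)); last first.
    move=> i _; have hi : (i <= k)%N := ltn_ord i.
    rewrite /bump leq0n add0n add1n subSS subnK //.
    by rewrite Pv_scale exprS mulrA.
  rewrite -mulr_sumr /Tpi /Ppi /piapp exprS.
  have := ler_wpM2l g0 Hpv.
  lra.
case=> [|k] /andP[Hk1 Hk] x //.
split.
  apply: le_trans _ (hvL k Hk x); apply: le_trans _ (LB k Hk x (pis k x)).
  rewrite /BL /v_nonstat /=.
  under eq_bigr => j _ do rewrite /Pseg /piapp (subKn (ltn_ord j : (j <= k)%N)).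
  by [].
apply: le_trans (hvU k Hk x) _; apply: le_trans (UB k Hk x (pis k.+1 x)) _.
rewrite /BU /v_nonstat /=.
under [in X in _ <= X]eq_bigr => j _ do rewrite /Pseg /piapp (subKn (ltnW (ltn_ord j))).
by [].
Qed.
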